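(* Let $\nu\in M_0(\mathbb D^* )$ and let $W$ be a M\''obius transformation of $\widehat{\mathbb C}$ such that $W\circ F_\nu$ is holomorphic on $\mathbb D$. If $\Phi=\log(W\circ F_\nu)'$ belongs to $B_0(\mathbb D)$, then $W\circ F_\nu$ maps $\mathbb D$ onto a bounded domain in $\mathbb C$.
   Context: $\mathbb D$ is the unit disk, $\widehat{\mathbb C}=\mathbb C\cup\{\infty\}$, $\mathbb D^*=\widehat{\mathbb C}\setminus\overline{\mathbb D}$. $M(\mathbb D^* )=\{\mu\in L^\infty(\mathbb D^* ):\|\mu\|_\infty<1\}$, and $M_0(\mathbb D^* )=\{\mu\in M(\mathbb D^* ):\lim_{t\to0}\operatorname{ess\,sup}_{|z|<1+t}|\mu(z)|=0\}$ (asymptotically conformal Beltrami coefficients). For $\mu\in M(\mathbb D^* )$, $F_\mu$ is the unique conformal homeomorphism of $\mathbb D$ onto a bounded domain in $\mathbb C$ with $F_\mu(0)=0$, $F_\mu'(0)=1$, extending to a quasiconformal self-homeomorphism of $\widehat{\mathbb C}$ with $F_\mu(\infty)=\infty$ and complex dilatation $\mu$ on $\mathbb D^*$. $B_0(\mathbb D)$ (little Bloch space) is the space of holomorphic $\Phi$ on $\mathbb D$ with $\sup_{z\in\mathbb D}(1-|z|^2)|\Phi'(z)|<\infty$ and $\lim_{t\to0}\sup_{|z|>1-t}(1-|z|^2)|\Phi'(z)|=0$ (functions differing by constants identified). *)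

(* Defs.v *)
(* The complex plane is modelled by [R[i]^o]
   (mathcomp-real-closed complex numbers over a [realType] R, viewed as a
   normed module over itself, so that ['D_1 f z] is the complex derivative).
   Lebesgue measure on the plane is the product Lebesgue measure on [R * R],
   transported by [toC]. *)
From HB Require Import structures.
From mathcomp Require Import all_boot all_order all_algebra.
From mathcomp Require Import all_classical all_reals all_analysis.
From mathcomp Require Import complex.
Set Implicit Arguments.
Unset Strict Implicit.
Unset Printing Implicit Defensive.
Import Order.TTheory GRing.Theory Num.Theory.
Import numFieldNormedType.Exports.
Local Open Scope ring_scope.
Local Open Scope classical_set_scope.

Section Defs.
Variable R : realType.

Local Notation C := (R[i])^o.

Definition toC (p : R * R) : C := Complex p.1 p.2.

Definition rC (x : R) : C := Complex x 0.

Definition iC : C := Complex 0 1.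

Definition leb2 := (@lebesgue_measure R \x @lebesgue_measure R)%E.

Definition disk : set C := [set z | `|z| < 1].

Definition Dstar2 : set (R * R) := [set p | 1 < p.1 ^+ 2 + p.2 ^+ 2].

Definition holo_on (f : C -> C) (A : set C) : Prop :=
  forall z, A z -> derivable f z 1.

Definition cexp (w : C) : C :=
  rC (expR (complex.Re w)) * Complex (cos (complex.Im w)) (sin (complex.Im w)).

Definition beltrami_coeff (nu : C -> C) : Prop :=
  measurable_fun Dstar2 (fun p => complex.Re (nu (toC p))) /\
  measurable_fun Dstar2 (fun p => complex.Im (nu (toC p))) /\
  exists k : R, k < 1 /\
    {ae leb2, forall p, Dstar2 p -> `|nu (toC p)| <= rC k}.

Definition asymp_conformal (nu : C -> C) : Prop :=
  beltrami_coeff nu /\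
  forall eps : R, 0 < eps -> exists t : R, 0 < t /\
    {ae leb2, forall p, Dstar2 p -> p.1 ^+ 2 + p.2 ^+ 2 < (1 + t) ^+ 2 ->
       `|nu (toC p)| <= rC eps}.

Definition abs_cont_on (a b : R) (g : R -> C) : Prop :=
  forall eps : R, 0 < eps -> exists delta : R, 0 < delta /\
    forall (n : nat) (u v : nat -> R),
      (forall k, (k < n)%N -> a <= u k /\ u k <= v k /\ v k <= b) ->
      (forall i j, (i < n)%N -> (j < n)%N -> i <> j ->
         v i <= u j \/ v j <= u i) ->
      \sum_(k < n) (v k - u k) < delta ->
      \sum_(k < n) `|g (v k) - g (u k)| < rC eps.

Definition ACL (f : C -> C) : Prop :=
  forall a b c d : R,
    {ae @lebesgue_measure R, forall y, c <= y <= d ->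
       abs_cont_on a b (fun x => f (toC (x, y)))} /\
    {ae @lebesgue_measure R, forall x, a <= x <= b ->
       abs_cont_on c d (fun y => f (toC (x, y)))}.

(* f has complex dilatation mu almost everywhere on A (subset of R * R):
   the partial derivatives f_x, f_y exist and
   f_zbar = (f_x + i f_y)/2 = mu * f_z = mu * (f_x - i f_y)/2 *)
Definition dilatation_on (f : C -> C) (mu : C -> C) (A : set (R * R)) : Prop :=
  {ae leb2, forall p, A p -> exists fx fy : C,
     ((fun h : R => (f (toC p + rC h) - f (toC p)) / rC h) @ (0 : R)^' --> fx) /\
     ((fun h : R => (f (toC p + iC * rC h) - f (toC p)) / rC h) @ (0 : R)^' --> fy) /\
     (fx + iC * fy) / 2 = mu (toC p) * ((fx - iC * fy) / 2)}.

Definition is_F (nu : C -> C) (F : C -> C) : Prop :=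
  (* quasiconformal self-homeomorphism of the plane (fixing infinity) *)
  (exists G : C -> C, cancel F G /\ cancel G F /\ continuous F /\ continuous G) /\
  ACL F /\
  holo_on F disk /\ F 0 = 0 /\ 'D_1 F 0 = 1 /\ bounded_set (F @` disk) /\
  dilatation_on F nu Dstar2.

Definition mobius (a b c d : C) (z : C) : C := (a * z + b) / (c * z + d).

Definition little_bloch (Phi : C -> C) : Prop :=
  holo_on Phi disk /\
  (exists M : R, forall z, disk z -> (1 - `|z| ^+ 2) * `|'D_1 Phi z| <= rC M) /\
  (forall eps : R, 0 < eps -> exists t : R, 0 < t /\
     forall z, disk z -> 1 - rC t < `|z| ->
       (1 - `|z| ^+ 2) * `|'D_1 Phi z| <= rC eps).

End Defs.

(* Main.v *)
Require Import Defs.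
From HB Require Import structures.
From mathcomp Require Import all_boot all_order all_algebra.
From mathcomp Require Import all_classical all_reals all_analysis.
From mathcomp Require Import complex.
From mathcomp Require Import ring lra.
Import Order.TTheory GRing.Theory Num.Theory.
Import numFieldNormedType.Exports.
Local Open Scope ring_scope.
Local Open Scope classical_set_scope.
Section S. Variable R : realType.
Local Notation C := (R[i])^o.
Local Notation Re := complex.Re.
Local Notation Im := complex.Im.
Ltac simpc := do ?
  [ rewrite -[- (Complex _ _)]/(Complex _ _)
  | rewrite -[(Complex _ _) - (Complex _ _)]/(Complex _ _)
  | rewrite -[(Complex _ _) + (Complex _ _)]/(Complex _ _)
  | rewrite -[(Complex _ _) * (Complex _ _)]/(Complex _ _)
  | rewrite (mulrNN, mulrN, mulNr, opprB, opprD, mulr0, mul0r,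
    subr0, sub0r, addr0, add0r, mulr1, mul1r, subrr, opprK, oppr0,
    eqxx) ].
Definition nc (z : C) : R := Re `|z|.
Lemma ncE (z : C) : `|z| = rC (nc z).
Proof. by rewrite /nc normc_def. Qed.
Lemma posC (d : R[i]) : 0 < d -> d = rC (Re d) /\ 0 < Re d.
Proof. case: d => dr di; rewrite ltcE /= => /andP[/eqP -> ->]; by []. Qed.
Lemma nearC (P : C -> Prop) : (\forall x \near (0:C)^', P x) -> exists d : R, 0 < d /\ forall x : C, nc x < d -> x != 0 -> P x.
Proof.
move=> /nbhs_normP [del del0 Hdel].
have [dE dp] := @posC del del0.
exists (Re del); split => // x xd x0.
apply: Hdel => //. rewrite /ball_ /= sub0r normrN ncE dE. by rewrite ltcR.
Qed.
Lemma nearR (P : R -> Prop) : (exists d : R, 0 < d /\ forall x : R, `|x| < d -> x != 0 -> P x) -> (\forall x \near (0:R)^', P x).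
Proof.
move=> [d [d0 Hd]].
apply/nbhs_normP. exists d => //= x. rewrite /ball_ /= sub0r normrN. move=> xd x0. apply: Hd => //.
Qed.
Lemma rCM (x y : R) : rC (x * y) = rC x * rC y :> C.
Proof. by rewrite /rC; simpc. Qed.
Lemma rCD (x y : R) : rC (x + y) = rC x + rC y :> C.
Proof. by rewrite /rC; simpc. Qed.
Lemma rCV (x : R) : rC (x^-1) = (rC x)^-1 :> C.
Proof. exact: (fmorphV (real_complex R)). Qed.
Lemma ncM (x y : C) : nc (x * y) = nc x * nc y.
Proof. by rewrite /nc normrM !ncE -rCM. Qed.
Lemma nc_rC (t : R) : nc (rC t) = `|t|.
Proof. by rewrite /nc normc_def /= expr0n /= addr0 sqrtr_sqr. Qed.
Lemma nc_ge0 (x : C) : 0 <= nc x.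
Proof. by rewrite /nc normc_def /= sqrtr_ge0. Qed.
Lemma Re_le (x : C) : `|Re x| <= nc x.
Proof. have := normc_ge_Re x. rewrite [in X in _ <= X]normc_def lecR => H. by rewrite /nc normc_def. Qed.
Lemma ReMr (w : C) (t : R) : Re (w * rC t) = Re w * t.
Proof. by case: w => a b; rewrite /rC; simpc. Qed.
Lemma ReB (x y : C) : Re (x - y) = Re x - Re y.
Proof. by case: x; case: y. Qed.
Lemma ReD (x y : C) : Re (x + y) = Re x + Re y.
Proof. by case: x; case: y. Qed.
Lemma nc_eq0 (x : C) : (nc x == 0) = (x == 0).
Proof. by rewrite -[x == 0]normr_eq0 ncE /rC eq_complex /= eqxx andbT. Qed.
Lemma real_dir (H : C -> C) (zeta e : C) (r : R) :
  nc zeta = 1 -> derivable H (rC r * zeta) 1 ->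
  is_derive r 1 (fun s : R => Re (e * H (rC s * zeta)))
    (Re (e * zeta * 'D_1 H (rC r * zeta))).
Proof.
move=> nz hd.
set z := rC r * zeta; set D := 'D_1 H z.
have hq : (fun h : C => h^-1 *: ((H \o shift z) (h *: 1) - H z)) @ 0^' --> D := hd.
have zeta0 : zeta != 0 by rewrite -nc_eq0 nz oner_eq0.
have e1 : 0 < nc e + 1 by rewrite ltr_wpDl // nc_ge0.
have key : (fun s : R => s^-1 *: (((fun s => Re (e * H (rC s * zeta))) \o shift r) (s *: 1)
    - Re (e * H (rC r * zeta)))) @ 0^' --> Re (e * zeta * D).
  apply/cvgrPdist_lt => eps eps0.
  have epsC : 0 < rC (eps / (nc e + 1)) :> R[i].
    by rewrite /rC ltcE /= eqxx divr_gt0.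
  move/cvgrPdist_lt: hq => /(_ _ epsC) hq'.
  have [d [d0 Hd]] := nearC _ hq'.
  apply: nearR; exists d; split => // s sd s0.
  set h := rC s * zeta.
  have hn : nc h < d by rewrite /h ncM nz mulr1 nc_rC.
  have h0 : h != 0 by rewrite -nc_eq0 /h ncM nz mulr1 nc_rC normr_eq0.
  have := Hd h hn h0.
  rewrite /= !ncE ltcR.
  have -> : h *: 1 + z = rC (s *: 1 + r) * zeta.
    by rewrite /h /z scaler1 [in RHS]/GRing.scale /= mulr1 rCD mulrDl.
  set X := H (rC (s *: 1 + r) * zeta) - H z.
  have -> : s^-1 *: (Re (e * H (rC (s *: 1 + r) * zeta)) - Re (e * H (rC r * zeta)))
     = Re (e * zeta * (h^-1 *: X)).
    rewrite -ReB -mulrBr -/z -/X.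
    rewrite /h /GRing.scale /= invfM -rCV.
    have -> : e * zeta * (rC s^-1 / zeta * X) = e * X * rC s^-1 by field.
    by rewrite ReMr mulrC.
  move=> Hlt.
  have -> : Re (e * zeta * D) - Re (e * zeta * (h^-1 *: X)) = Re (e * zeta * (D - h^-1 *: X)).
    by rewrite -ReB mulrBr.
  apply: (le_lt_trans (Re_le _)).
  rewrite ncM ncM nz mulr1.
  apply: (@le_lt_trans _ _ (nc e * (eps / (nc e + 1)))).
    by apply: ler_wpM2l; [exact: nc_ge0 | exact: ltW].
  rewrite mulrA ltr_pdivrMr // [eps * _]mulrC ltr_pM2r //.
  by rewrite ltrDl ltr01.
apply: DeriveDef.
  by apply/cvg_ex; exists (Re (e * zeta * D)).
exact: cvg_lim.
Qed.
Lemma is_derive_comp1 (f g : R -> R) (x df dg : R) :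
  is_derive x 1 f df -> is_derive (f x) 1 g dg -> is_derive x 1 (g \o f) (dg * df).
Proof.
move=> hf hg.
have df1 : derivable f x 1 by [].
have dg1 : derivable g (f x) 1 by [].
apply: DeriveDef.
  apply/derivable1_diffP; apply: differentiable_comp; exact/derivable1_diffP.
by rewrite -derive1E derive1_comp // !derive1E !derive_val.
Qed.
Arguments is_derive_comp1 {f g x df dg}.
Lemma is_derive_1m (x : R) : is_derive x 1 (fun s : R => 1 - s) (-1).
Proof.
have := @is_deriveB R R R (cst 1) id x 1 0 1 _ _.
by rewrite sub0r; apply.
Qed.
Lemma is_derive_ln1m (s : R) : s < 1 -> is_derive s 1 (fun x => ln (1 - x)) (- (1 - s)^-1).
Proof.
move=> s1.
have h := is_derive_comp1 (is_derive_1m s) (is_derive1_ln (x := 1 - s) _).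
rewrite mulrN1 in h; apply: h; by rewrite subr_gt0.
Qed.
Lemma is_derive_sqrt1m (s : R) : s < 1 -> is_derive s 1 (fun x => Num.sqrt (1 - x)) (- (2 * Num.sqrt (1 - s))^-1).
Proof.
move=> s1.
have h := is_derive_comp1 (is_derive_1m s) (is_derive1_sqrt (x := 1 - s) _).
rewrite mulrN1 in h; apply: h; by rewrite subr_gt0.
Qed.
Lemma is_deriveDR (f g : R -> R) (x df dg : R) :
  is_derive x 1 f df -> is_derive x 1 g dg -> is_derive x 1 (fun s => f s + g s) (df + dg).
Proof. move=> hf hg; exact: is_deriveD. Qed.
Lemma is_deriveMlR (g : R -> R) (k x dg : R) :
  is_derive x 1 g dg -> is_derive x 1 (fun s => k * g s) (k * dg).
Proof. move=> hg; exact: is_deriveZ. Qed.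
Lemma mono_help (v dv : R -> R) (a b : R) :
  a <= b -> (forall s, a <= s <= b -> is_derive s 1 v (dv s)) ->
  (forall s, a < s < b -> dv s <= 0) -> v b <= v a.
Proof.
move=> ab hd hn.
apply: (@ler0_derive1_nincr R v a b) => //.
- move=> x; rewrite in_itv /= => /andP[ax xb].
  have : is_derive x 1 v (dv x) by apply: hd; rewrite !ltW.
  by [].
- move=> x; rewrite in_itv /= => /andP[ax xb].
  have hx : is_derive x 1 v (dv x) by apply: hd; rewrite !ltW.
  by rewrite derive1E derive_val; apply: hn; rewrite ax xb.
- apply: derivable_within_continuous => x; rewrite in_itv /= => hx.
  have : is_derive x 1 v (dv x) by apply: hd.
  by [].
Qed.
Lemma mono_Phi (Phi : C -> C) (zeta : C) (K r0 r : R) :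
  nc zeta = 1 -> r0 <= r -> r < 1 -> 0 <= r0 ->
  (forall s, r0 <= s <= r -> derivable Phi (rC s * zeta) 1) ->
  (forall s, r0 < s < r -> (1 - s^+2) * nc ('D_1 Phi (rC s * zeta)) <= K) ->
  Re (Phi (rC r * zeta)) + K * ln (1 - r) <= Re (Phi (rC r0 * zeta)) + K * ln (1 - r0).
Proof.
move=> nz r0r r1 r00 hder hK.
pose v : R -> R := fun s => Re (1 * Phi (rC s * zeta)) + K * ln (1 - s).
pose dv : R -> R := fun s => Re (1 * zeta * 'D_1 Phi (rC s * zeta)) + K * (- (1 - s)^-1).
suff H : v r <= v r0.
  by move: H; rewrite /v /= !mul1r.
apply: (@mono_help v dv r0 r r0r).
- move=> s /andP[s0 sr].
  apply: is_deriveDR; first by apply: (real_dir _ _ _ _ nz); apply: hder; rewrite s0 sr.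
  apply: is_deriveMlR; apply: is_derive_ln1m.
  exact: le_lt_trans sr r1.
- move=> s /andP[s0 sr].
  have s1 : s < 1 := lt_trans sr r1.
  have sp : 0 < s by exact: le_lt_trans r00 s0.
  have s1p : 0 < 1 - s by rewrite subr_gt0.
  rewrite /dv mul1r mulrN subr_le0.
  apply: (le_trans (ler_norm _)); apply: (le_trans (Re_le _)).
  rewrite ncM nz mul1r ler_pdivlMr //.
  apply: le_trans (hK s _); last by rewrite s0 sr.
  rewrite mulrC ler_wpM2r ?nc_ge0 //.
  rewrite lerD2l lerN2 expr2 ger_pMr //.
  exact: ltW.
Qed.
Lemma nc_rs (s : R) (zeta : C) : nc zeta = 1 -> 0 <= s -> nc (rC s * zeta) = s.
Proof. by move=> nz s0; rewrite ncM nz mulr1 nc_rC ger0_norm. Qed.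
Lemma Phi_bound (Phi : C -> C) (M t : R) (zeta : C) (r : R) :
  (forall z, nc z < 1 -> derivable Phi z 1) ->
  (forall z, nc z < 1 -> (1 - nc z ^+ 2) * nc ('D_1 Phi z) <= M) ->
  (forall z, nc z < 1 -> 1 - t < nc z -> (1 - nc z ^+ 2) * nc ('D_1 Phi z) <= 2^-1) ->
  0 < t -> t <= 2^-1 -> 0 <= M -> nc zeta = 1 -> 0 <= r -> r < 1 ->
  Re (Phi (rC r * zeta)) <= Re (Phi 0) - M * ln t - 2^-1 * ln (1 - r).
Proof.
move=> hPhi hM ht t0 t2 M0 nz r0 r1.
have t1 : t < 1 by apply: le_lt_trans t2 _; rewrite invf_lt1 // ltr1n.
have hd : forall s, 0 <= s -> s < 1 -> derivable Phi (rC s * zeta) 1.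
  by move=> s s0 s1; apply: hPhi; rewrite nc_rs.
have P0 : Phi (rC 0 * zeta) = Phi 0 by rewrite /rC mul0r.
have step1 : forall r', 0 <= r' -> r' < 1 -> Re (Phi (rC r' * zeta)) <= Re (Phi 0) - M * ln (1 - r').
  move=> r' r'0 r'1.
  have H : Re (Phi (rC r' * zeta)) + M * ln (1 - r') <= Re (Phi (rC 0 * zeta)) + M * ln (1 - 0).
    apply: (@mono_Phi Phi zeta M 0 r' nz r'0 r'1 (lexx 0)).
    - move=> s /andP[s0 sr]; apply: hd => //; exact: le_lt_trans sr r'1.
    - move=> s /andP[s0 sr]; have := hM (rC s * zeta).
      rewrite nc_rs //; last exact: ltW.
      by apply; exact: lt_trans sr r'1.
  by move: H; rewrite P0 subr0 ln1 mulr0 addr0 lerBrDr.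
have lnt : ln t <= 0 by apply: ln_le0; exact: ltW.
have lnr : ln (1 - r) <= 0 by apply: ln_le0; rewrite lerBlDr lerDl.
case: (leP r (1 - t)) => hr.
  have H2 : M * ln t <= M * ln (1 - r).
    by rewrite ler_wpM2l // ler_ln ?posrE; lra.
  have := step1 r r0 r1; lra.
have e1 : 1 - (1 - t) = t by rewrite opprB addrC subrK.
have r00 : 0 <= 1 - t by lra.
have H : Re (Phi (rC r * zeta)) + 2^-1 * ln (1 - r) <= Re (Phi (rC (1 - t) * zeta)) + 2^-1 * ln (1 - (1 - t)).
  apply: (@mono_Phi Phi zeta 2^-1 (1 - t) r nz (ltW hr) r1 r00).
  - move=> s /andP[s0 sr]; apply: hd; lra.
  - move=> s /andP[s0 sr]; have := ht (rC s * zeta).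
    rewrite nc_rs //; last by lra.
    by apply; lra.
have := step1 (1 - t) r00 ltac:(lra).
move=> H1; rewrite e1 in H H1; lra.
Qed.
Lemma expR_half_ln (y : R) : 0 < y -> expR (2^-1 * ln y) = Num.sqrt y.
Proof.
move=> y0.
have e : 2^-1 * ln y * 2%:R = ln y by lra.
rewrite -[in RHS](lnK y0) -[in RHS]e.
by rewrite expRM_natr sqrtr_sqr ger0_norm // expR_ge0.
Qed.
Lemma nc_cexp (w : C) : nc (cexp w) = expR (Re w).
Proof.
rewrite /cexp ncM nc_rC ger0_norm ?expR_ge0 //.
by rewrite /nc normc_def /= cos2Dsin2 sqrtr1 mulr1.
Qed.
Lemma algR (x : R) : x%:A = x.
Proof. exact: mulr1. Qed.
Lemma G_bound (Phi G : C -> C) (A : R) (zeta e : C) (r : R) :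
  (forall z, nc z < 1 -> derivable G z 1) ->
  (forall z, nc z < 1 -> cexp (Phi z) = 'D_1 G z) ->
  (forall s, 0 <= s -> s < 1 -> Re (Phi (rC s * zeta)) <= A - 2^-1 * ln (1 - s)) ->
  nc zeta = 1 -> nc e <= 1 -> 0 <= r -> r < 1 ->
  Re (e * G (rC r * zeta)) <= Re (e * G 0) + 2 * expR A.
Proof.
move=> hG hD hP nz ne r0 r1.
pose v : R -> R := fun s => Re (e * G (rC s * zeta)) + (2 * expR A) * Num.sqrt (1 - s).
pose dv : R -> R := fun s => Re (e * zeta * 'D_1 G (rC s * zeta)) + (2 * expR A) * (- (2 * Num.sqrt (1 - s))^-1).
have P0 : G (rC 0 * zeta) = G 0 by rewrite /rC mul0r.
suff H : v r <= v 0.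
  move: H; rewrite /v /= P0 subr0 sqrtr1 mulr1 => H.
  apply: le_trans H; rewrite lerDl; apply: mulr_ge0; last exact: sqrtr_ge0.
  by rewrite mulr_ge0 // expR_ge0.
apply: (@mono_help v dv 0 r r0).
- move=> s /andP[s0 sr].
  have s1 : s < 1 by exact: le_lt_trans sr r1.
  apply: is_deriveDR; first by apply: (real_dir _ _ _ _ nz); apply: hG; rewrite nc_rs.
  by apply: is_deriveMlR; apply: is_derive_sqrt1m.
- move=> s /andP[s0 sr].
  have s1 : s < 1 := lt_trans sr r1.
  have s1p : 0 < 1 - s by rewrite subr_gt0.
  have sq : 0 < Num.sqrt (1 - s) by rewrite sqrtr_gt0.
  rewrite /dv mulrN subr_le0.
  apply: (le_trans (ler_norm _)); apply: (le_trans (Re_le _)).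
  rewrite invfM mulrA [2 * expR A * 2^-1]mulrC mulrA mulVf ?pnatr_eq0 // mul1r.
  rewrite ncM ncM nz mulr1 ler_pdivlMr //.
  rewrite -hD; last by rewrite nc_rs // ltW.
  rewrite nc_cexp -expR_half_ln //.
  have h1 : expR (Re (Phi (rC s * zeta))) * expR (2^-1 * ln (1 - s)) <= expR A.
    rewrite -expRD ler_expR; have := hP s (ltW s0) s1; lra.
  have h2 : 0 <= expR (Re (Phi (rC s * zeta))) by exact: expR_ge0.
  have h3 : 0 <= expR (2^-1 * ln (1 - s)) by exact: expR_ge0.
  have h4 := nc_ge0 e.
  apply: le_trans h1.
  apply: ler_pM => //; first exact: mulr_ge0.
  exact: ler_piMl.
Qed.
Lemma diskE (z : C) : disk z <-> nc z < 1.
Proof. by rewrite /disk /= ncE ltcR. Qed.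
Lemma rC_bloch (a b : R) : (1 - rC a ^+ 2) * rC b = rC ((1 - a ^+ 2) * b) :> C.
Proof. by rewrite rCM rCD /rC expr2 expr2; simpc. Qed.
Lemma nc_ReIm (x : C) : nc x <= `|Re x| + `|Im x|.
Proof.
rewrite /nc normc_def /=.
set a := Re x; set b := Im x.
have ha : `|a| ^+ 2 = a ^+ 2 by rewrite real_normK // num_real.
have hb : `|b| ^+ 2 = b ^+ 2 by rewrite real_normK // num_real.
have h0 : 0 <= `|a| + `|b| by rewrite addr_ge0.
rewrite -[X in _ <= X]ger0_norm // -sqrtr_sqr.
rewrite ler_sqrt; last exact: sqr_ge0.
have h1 : 0 <= `|a| * `|b| by rewrite mulr_ge0.
rewrite sqrrD ha hb.
lra.
Qed.
Lemma Re_mi (x : C) : Re (- iC R * x) = Im x.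
Proof. by case: x => a b; rewrite /iC; simpc. Qed.
Lemma Re_i (x : C) : Re (iC R * x) = - Im x.
Proof. by case: x => a b; rewrite /iC; simpc. Qed.
Lemma Re_m1 (x : C) : Re (- 1 * x) = - Re x.
Proof. by rewrite mulN1r; case: x. Qed.
Lemma bnd_of (A : set C) (B : R) : (forall x, A x -> nc x <= B) -> bounded_set A.
Proof.
move=> hB.
rewrite /bounded_set /= /bounded_near.
exists (rC B); split.
  by rewrite /rC complex_real.
move=> M hM x Ax /=.
apply: le_trans (ltW hM).
by rewrite ncE lecR hB.
Qed.
Lemma ncN (x : C) : nc (- x) = nc x.
Proof. by rewrite /nc normrN. Qed.
Lemma nc_iC : nc (iC R) = 1.
Proof. by rewrite /nc normc_def /= expr0n /= add0r expr1n sqrtr1. Qed.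
Lemma nc1 : nc 1 = 1.
Proof. by rewrite -[1 : C]/(rC 1) nc_rC normr1. Qed.
Lemma bounded_main (Phi G : C -> C) :
  holo_on G (disk (R:=R)) -> (forall z, disk z -> cexp (Phi z) = 'D_1 G z) -> little_bloch Phi ->
  bounded_set (G @` disk (R:=R)).
Proof.
move=> hG hD [hP [[M hM] hB]].
have [t [t0 ht]] := hB 2^-1 ltac:(by rewrite invr_gt0 ltr0n).
pose t' := Num.min t 2^-1.
have t'0 : 0 < t' by rewrite lt_min t0 invr_gt0 ltr0n.
have t'2 : t' <= 2^-1 by rewrite ge_min lexx orbT.
have t't : t' <= t by rewrite ge_min lexx.
have hP' : forall z, nc z < 1 -> derivable Phi z 1.
  by move=> z hz; apply: hP; apply/diskE.
have hM' : forall z, nc z < 1 -> (1 - nc z ^+ 2) * nc ('D_1 Phi z) <= M.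
  by move=> z hz; have := hM z ((diskE z).2 hz); rewrite !ncE rC_bloch lecR.
have ht' : forall z, nc z < 1 -> 1 - t' < nc z -> (1 - nc z ^+ 2) * nc ('D_1 Phi z) <= 2^-1.
  move=> z hz hzt.
  have : 1 - rC t < `|z| :> C.
    have -> : (1 - rC t : C) = rC (1 - t) by rewrite /rC; simpc.
    rewrite ncE ltcR; lra.
  move=> /(ht z ((diskE z).2 hz)).
  by rewrite !ncE rC_bloch lecR.
have M0 : 0 <= M.
  have := hM' 0; rewrite /nc normr0 /= expr0n /= subr0 mul1r => h.
  apply: le_trans (h ltr01); exact: nc_ge0.
pose A := Re (Phi 0) - M * ln t'.
have hPb : forall zeta, nc zeta = 1 -> forall s, 0 <= s -> s < 1 ->
    Re (Phi (rC s * zeta)) <= A - 2^-1 * ln (1 - s).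
  by move=> zeta nz s s0 s1; exact: Phi_bound hP' hM' ht' t'0 t'2 M0 nz s0 s1.
have hG' : forall z, nc z < 1 -> derivable G z 1.
  by move=> z hz; apply: hG; apply/diskE.
have hD' : forall z, nc z < 1 -> cexp (Phi z) = 'D_1 G z.
  by move=> z hz; apply: hD; apply/diskE.
pose B := nc (G 0) + 2 * expR A.
have key : forall w, nc w < 1 -> forall e, nc e = 1 -> Re (e * G w) <= B.
  move=> w hw e ne.
  have [zeta [r [nz [r0 [r1 wE]]]]] : exists zeta r, nc zeta = 1 /\ 0 <= r /\ r < 1 /\ w = rC r * zeta.
    case: (eqVneq w 0) => [->|w0].
      by exists 1, 0; rewrite /rC mul0r nc1.
    have nw0 : nc w != 0 by rewrite nc_eq0.
    exists (w * rC (nc w)^-1), (nc w); split; last split; last split => //.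
    - by rewrite ncM nc_rC ger0_norm ?invr_ge0 ?nc_ge0 // mulfV.
    - exact: nc_ge0.
    - rewrite mulrC -mulrA -rCM mulVf // .
      by rewrite -[rC 1]/(1 : C) mulr1.
  rewrite wE.
  apply: le_trans (@G_bound Phi G A zeta e r hG' hD' (hPb zeta nz) nz _ r0 r1) _.
    by rewrite ne.
  rewrite /B lerD2r.
  apply: le_trans (ler_norm _) _; apply: le_trans (Re_le _) _.
  by rewrite ncM ne mul1r.
apply: (@bnd_of _ (B + B)) => _ [w hw <-].
have hw' : nc w < 1 by apply/diskE.
apply: le_trans (nc_ReIm _) _.
apply: lerD; rewrite ler_norml; apply/andP; split.
- have := key w hw' (- 1) ltac:(by rewrite ncN nc1).
  by rewrite Re_m1 lerNl.
- by have := key w hw' 1 nc1; rewrite mul1r.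
- have := key w hw' (iC R) nc_iC.
  by rewrite Re_i lerNl.
- by have := key w hw' (- iC R) ltac:(by rewrite ncN nc_iC); rewrite Re_mi.
Qed.
Lemma rCB (x y : R) : rC (x - y) = rC x - rC y :> C.
Proof. by rewrite /rC; simpc. Qed.
Lemma cont_rs (w : C) : continuous (fun s : R => rC s * w).
Proof.
move=> s; apply/cvgrPdist_lt => eps eps0.
have [eE ep] := @posC eps eps0.
have w1 : 0 < nc w + 1 by rewrite ltr_wpDl // nc_ge0.
apply/nbhs_normP; exists (Re eps / (nc w + 1)); first by rewrite /= divr_gt0.
move=> s' /=; rewrite /ball_ /= => hs.
rewrite -mulrBl -rCB normrM !ncE -rCM eE ltcR nc_rC.
apply: (@le_lt_trans _ _ (`|s - s'| * (nc w + 1))).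
  by rewrite ler_wpM2l // lerDl.
by rewrite -ltr_pdivlMr.
Qed.
Lemma holo_cont (G : C -> C) (z : C) : derivable G z 1 -> {for z, continuous G}.
Proof. move=> h. apply: differentiable_continuous. exact/derivable1_diffP. Qed.
Lemma connected_part (G : C -> C) : holo_on G (disk (R:=R)) -> connected (G @` disk (R:=R)).
Proof.
move=> hG.
have E : G @` disk (R:=R) = \bigcup_(w in disk (R:=R)) ((fun s : R => G (rC s * w)) @` `[0, 1]).
  apply/seteqP; split.
  - move=> _ [w hw <-]; exists w => //; exists 1.
      by rewrite /= in_itv /= lexx ler01.
    by rewrite -[rC 1]/(1 : C) mul1r.
  - move=> _ [w hw [s hs <-]]; exists (rC s * w) => //.
    move: hs; rewrite /= in_itv /= => /andP[s0 s1].
    apply/diskE; rewrite ncM nc_rC ger0_norm //.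
    apply: le_lt_trans (ler_piMl (nc_ge0 w) s1) _; exact/diskE.
rewrite E; apply: bigcup_connected.
  exists (G 0) => w hw; exists 0; first by rewrite /= in_itv /= lexx ler01.
  by rewrite /rC mul0r.
move=> w hw; apply: connected_continuous_connected; first exact: segment_connected.
apply: continuous_in_subspaceT => s; rewrite inE /= in_itv /= => /andP[s0 s1].
apply: continuous_comp; first exact: cont_rs.
apply: holo_cont; apply: hG.
apply/diskE; rewrite ncM nc_rC ger0_norm //.
apply: le_lt_trans (ler_piMl (nc_ge0 w) s1) _; exact/diskE.
Qed.
Lemma no_pole (F Gi : C -> C) (a b c d : C) :
  cancel F Gi -> continuous F -> a * d - b * c != 0 ->
  holo_on (fun z => mobius a b c d (F z)) (disk (R:=R)) ->
  forall z, disk z -> c * F z + d != 0.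
Proof.
move=> FK Fc hdet hG z0 hz0; apply/negP => /eqP h0.
have hd : d = - (c * F z0) by apply/eqP; rewrite -addr_eq0 addrC h0.
have c0 : c != 0.
  apply/negP => /eqP c0; have e0 : a * d - b * c = 0 by rewrite hd c0; ring.
  by rewrite e0 eqxx in hdet.
pose G := fun z => mobius a b c d (F z).
pose k := fun z => (c * F z + d) * G z - (a * F z + b).
have nz : a * F z0 + b != 0.
  apply/negP => /eqP h1; move: hdet.
  have -> : a * d - b * c = - (c * (a * F z0 + b)) by rewrite hd; ring.
  by rewrite h1 mulr0 oppr0 eqxx.
have Gc : {for z0, continuous G} by apply: holo_cont; apply: hG.
have h1 : (c * F z + d) @[z --> z0] --> c * F z0 + d.
  apply: (@cvgD _ C _ (nbhs z0)); last exact: cvg_cst.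
  by apply: cvgMl_tmp; apply: Fc.
have h2 : (a * F z + b) @[z --> z0] --> a * F z0 + b.
  apply: (@cvgD _ C _ (nbhs z0)); last exact: cvg_cst.
  by apply: cvgMl_tmp; apply: Fc.
have h3 : ((c * F z + d) * G z) @[z --> z0] --> (c * F z0 + d) * G z0.
  exact: (@cvgM _ _ (nbhs z0) _ _ _ _ _ h1 Gc).
have kc : k z @[z --> z0] --> k z0 by exact: (@cvgB _ C _ (nbhs z0) _ _ _ _ _ h3 h2).
have k1 : k z @[z --> z0^'] --> k z0 by apply: cvg_within_filter.
have k2 : k z @[z --> z0^'] --> (0 : C).
  apply: (cvg_trans _ (@cvg_cst _ (0 : C) _ _ _)).
  apply: near_eq_cvg; near=> z.
  have hz : z != z0 by near: z; exact: nbhs_dnbhs_neq.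
  have Fz : F z != F z0 by apply: contra hz => /eqP /(can_inj FK) ->.
  have cz : c * F z + d != 0.
    by rewrite hd -mulrBr mulf_neq0 // subr_eq0.
  by rewrite /k /G /mobius mulrC divfK // subrr.
  Unshelve. all: try by end_near.
  all: try exact: _.
have e : k z0 = 0.
  apply: (@cvg_unique C _ (k z @[z --> z0^'])); [exact: _| exact: k1 | exact: k2].
move: e; rewrite /k /G /mobius h0 mul0r sub0r => /eqP; rewrite oppr_eq0.
by rewrite (negbTE nz).
Qed.
Lemma disk_ball : disk (R:=R) = ball (0 : C) 1.
Proof. by apply/seteqP; split => z; rewrite /disk /ball /= /ball_ /= sub0r normrN. Qed.
Lemma open_part (F Gi : C -> C) (a b c d : C) :
  cancel F Gi -> cancel Gi F -> continuous Gi -> a * d - b * c != 0 ->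
  (forall z, disk z -> c * F z + d != 0) ->
  open ((fun z => mobius a b c d (F z)) @` disk (R:=R)).
Proof.
move=> FK GK Gic hdet hp.
pose Wi := fun v : C => (d * v - b) / (a - c * v).
have Wok : forall v', a - c * v' != 0 -> mobius a b c d (Wi v') = v'.
  move=> v' av'.
  have cu : c * Wi v' + d != 0.
    have -> : c * Wi v' + d = (a * d - b * c) / (a - c * v') by rewrite /Wi; field.
    by rewrite mulf_neq0 // invr_eq0.
  have e2 : a * Wi v' + b = v' * (c * Wi v' + d) by rewrite /Wi; field.
  by rewrite /mobius e2 mulfK.
rewrite openE => _ [z hz <-].
rewrite /interior /=.
set u := F z; set v := mobius a b c d u.
have cu := hp z hz.
have av : a - c * v != 0.
  have -> : a - c * v = (a * d - b * c) / (c * u + d) by rewrite /v /mobius; field.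
  by rewrite mulf_neq0 // invr_eq0.
have Wiv : Wi v = u.
  have e1 : d * v - b = u * (a - c * v) by rewrite /v /mobius; field.
  by rewrite /Wi e1 mulfK.
have g1 : (a - c * x) @[x --> v] --> a - c * v.
  apply: (@cvgB _ C _ (nbhs v)); first exact: cvg_cst.
  by apply: cvgMl_tmp; exact: cvg_id.
have Wic : Wi x @[x --> v] --> Wi v.
  apply: (@cvgM _ _ (nbhs v)).
    apply: (@cvgB _ C _ (nbhs v)); last exact: cvg_cst.
    by apply: cvgMl_tmp; exact: cvg_id.
  exact: cvgV.
have N1 : \forall v' \near v, disk (Gi (Wi v')).
  have hc : (Gi \o Wi) x @[x --> v] --> Gi (Wi v).
    exact: (@continuous_comp _ _ _ Wi Gi v Wic (Gic (Wi v))).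
  apply: hc; apply: open_nbhs_nbhs; split.
    by rewrite disk_ball; exact: ball_open.
  by rewrite Wiv /u FK.
have N2 : \forall v' \near v, a - c * v' != 0.
  have hp0 : 0 < `|a - c * v| by rewrite normr_gt0.
  move/cvgrPdist_lt: g1 => /(_ _ hp0) hn.
  near=> x.
  have hx : `|a - c * v - (a - c * x)| < `|a - c * v| by near: x; exact: hn.
  apply/negP => /eqP h; move: hx.
  by rewrite h subr0 ltxx.
near=> v'.
exists (Gi (Wi v')); first by near: v'; exact: N1.
rewrite GK; apply: Wok.
by near: v'; exact: N2.
Unshelve. all: by end_near.
Qed.
End S.

Theorem lemma3p3 (R : realType) (nu F : (R[i])^o -> (R[i])^o)
  (a b c d : (R[i])^o) (Phi : (R[i])^o -> (R[i])^o) :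
  asymp_conformal nu ->
  is_F nu F ->
  a * d - b * c != 0 ->
  holo_on (fun z => mobius a b c d (F z)) (@disk R) ->
  (forall z, disk z -> cexp (Phi z) = 'D_1 (fun w => mobius a b c d (F w)) z) ->
  little_bloch Phi ->
  bounded_set ((fun z => mobius a b c d (F z)) @` (@disk R)) /\
  open ((fun z => mobius a b c d (F z)) @` (@disk R)) /\
  connected ((fun z => mobius a b c d (F z)) @` (@disk R)).
Proof.
move=> _ [[Gi [FK [GK [Fc Gic]]]] _] hdet hG hD hB.
split; first exact: (@bounded_main R Phi _ hG hD hB).
split; last exact: (@connected_part R _ hG).
apply: (@open_part R F Gi a b c d FK GK Gic hdet).
exact: (@no_pole R F Gi a b c d FK Fc hdet hG).
Qed.
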